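(* Let $\mathcal{L}$ and $\mathcal{S}$ be ordered topological vector spaces over $\mathbb{R}$ with positive cones $\mathcal{L}_+$ and $\mathcal{S}_+$, and assume $\mathcal{S}$ is a dense subspace of $\mathcal{L}$. Let $\mathcal{A}\subset\mathcal{S}$ be a convex acceptance set (in $\mathcal{S}$) which is closed for the weak topology $\sigma(\mathcal{S},\mathcal{L}')$, and let $S=(S_0,S_T)$ be a traded asset with $S_T\in\mathcal{S}_+$. Assume $\rho_{\mathcal{A},S}:\mathcal{S}\to\overline{\mathbb{R}}$ is finite-valued and continuous on $\mathcal{S}$. Then the following statements are equivalent: (a) $\rho_{\mathcal{A},S}$ can be extended to a finite-valued, continuous risk measure on $\mathcal{L}$ (i.e. there is a finite-valued continuous risk measure on $\mathcal{L}$ whose restriction to $\mathcal{S}$ equals $\rho_{\mathcal{A},S}$); (b) $\rho_{\mathcal{A},S}$ is continuous at $0$ with respect to the $\mathcal{L}$-topology on $\mathcal{S}$; (c) $\mathcal{A}$ has nonempty interior with respect to the $\mathcal{L}$-topology on $\mathcal{S}$; (d) $\mathrm{Cl}_{\mathcal{L}}(\mathcal{A})$ has nonempty interior in $\mathcal{L}$. In this case, the extension is unique and is given by $\rho_{\mathrm{Cl}_{\mathcal{L}}(\mathcal{A}),S}:\mathcal{L}\to\overline{\mathbb{R}}$.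
   Context: For an ordered topological vector space $\mathcal{X}$ with positive cone $\mathcal{X}_+$, an acceptance set is a nonempty proper subset $\mathcal{A}\subset\mathcal{X}$ with $\mathcal{A}+\mathcal{X}_+\subset\mathcal{A}$. A traded asset is a pair $S=(S_0,S_T)$ with $S_0>0$ and $S_T\in\mathcal{X}_+$ nonzero. The risk measure associated to $\mathcal{A}$ and $S$ is $\rho_{\mathcal{A},S}:\mathcal{X}\to\overline{\mathbb{R}}$, $\rho_{\mathcal{A},S}(X)=\inf\{m\in\mathbb{R}: X+\frac{m}{S_0}S_T\in\mathcal{A}\}$; the same formula defines $\rho_{\mathcal{B},S}$ on $\mathcal{L}$ for $\mathcal{B}\subset\mathcal{L}$. $\mathcal{L}'$ is the topological dual of $\mathcal{L}$; $\sigma(\mathcal{S},\mathcal{L}')$ is the weak topology on $\mathcal{S}$ induced by restrictions of elements of $\mathcal{L}'$. The $\mathcal{L}$-topology on $\mathcal{S}$ is the relative topology induced by $\mathcal{L}$, and $\mathrm{Cl}_{\mathcal{L}}(\mathcal{A})$ is the closure of $\mathcal{A}$ in $\mathcal{L}$. *)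

(* Defs.v *)
From HB Require Import structures.
From mathcomp Require Import all_boot all_order all_algebra.
From mathcomp Require Import all_classical all_reals.
From mathcomp Require Import topology normedtype tvs convex ereal.
From mathcomp Require Import function_spaces initial_topology.

Set Implicit Arguments.
Unset Strict Implicit.
Unset Printing Implicit Defensive.

Import Order.TTheory GRing.Theory Num.Theory.
Local Open Scope classical_set_scope.
Local Open Scope ring_scope.

Definition positive_cone (R : realType) (V : lmodType R) (P : set V) : Prop :=
  [/\ P 0,
      (forall x y, P x -> P y -> P (x + y)),
      (forall (t : R) x, 0 <= t -> P x -> P (t *: x))
    & (forall x, P x -> P (- x) -> x = 0)].

Definition acceptance_set (R : realType) (V : lmodType R) (P : set V)
    (A : set V) : Prop :=
  [/\ A !=set0, A != setT & (forall a p, A a -> P p -> A (a + p))].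

Definition traded_asset (R : realType) (V : lmodType R) (P : set V)
    (S0 : R) (ST : V) : Prop :=
  0 < S0 /\ P ST /\ ST != 0.

(** rho_{A,S}(X) = inf { m in R : X + (m/S0) ST in A }  (inf of empty = +oo). *)
Definition rho (R : realType) (V : lmodType R) (A : set V) (S0 : R) (ST : V)
    (X : V) : \bar R :=
  ereal_inf [set m%:E | m in [set m : R | A (X + (m / S0) *: ST)]].

Definition finite_valued (T : Type) (R : realType) (f : T -> \bar R) : Prop :=
  forall x, f x \is a fin_num.

Definition tdual (R : realType) (L : topologicalLmodType R) : Type :=
  {f : {linear L -> R^o} | continuous f}.

(** The map S -> (L' -> R), s |-> (phi |-> phi (iota s)); the initial topology
    it induces from the pointwise (product) topology is sigma(S, L'). *)
Definition dual_pairing (R : realType) (L : topologicalLmodType R) (S : Type)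
    (iota : S -> L) (s : S) : {ptws tdual L -> R^o} :=
  fun phi => (sval phi : L -> R^o) (iota s).

Definition sigma_closed (R : realType) (L : topologicalLmodType R)
    (S : choiceType) (iota : S -> L) (A : set S) : Prop :=
  @closed (initial_topology (dual_pairing iota)) A.

(* Main.v *)
Require Import Defs.
From HB Require Import structures.
From mathcomp Require Import all_boot all_order all_algebra.
From mathcomp Require Import all_classical all_reals.
From mathcomp Require Import topology normedtype tvs convex ereal.
From mathcomp Require Import function_spaces initial_topology.
From mathcomp Require Import ring lra.
Import Order.TTheory GRing.Theory Num.Theory.
Local Open Scope classical_set_scope.
Local Open Scope ring_scope.
Unset Printing Implicit Defensive.

Section Topo.
Context {R : realType} {L : topologicalLmodType R}.

Lemma cont_scale (t : R) : continuous (fun y : L => t *: y).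
Proof.
move=> x.
apply: (@continuous_comp L (R^o * L)%type L (fun y => (t : R^o, y)) (fun z => z.1 *: z.2)); last exact: scale_continuous.
by apply: (@cvg_pair _ _ _ _ (nbhs (t : R^o))); [exact: cvg_cst|exact: cvg_id].
Qed.

Lemma cont_affine (t : R) (w : L) : continuous (fun y : L => t *: y + w).
Proof.
move=> x.
apply: (@continuous_comp L (L * L)%type L (fun y => (t *: y, w)) (fun z => z.1 + z.2)); last exact: add_continuous.
by apply: (@cvg_pair _ _ _ _ (nbhs (t *: x)) (nbhs w)); [exact: cont_scale|exact: cvg_cst].
Qed.

Lemma open_affine (t : R) (w : L) (O : set L) : open O -> open [set y | O (t *: y + w)].
Proof. by move=> oO; have /continuousP := cont_affine t w; apply. Qed.

Lemma nbhs_affine (t : R) (w : L) (x : L) (N : set L) :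
  nbhs (t *: x + w) N -> nbhs x [set y | N (t *: y + w)].
Proof. by move=> hN; exact: (cont_affine t w x). Qed.

Lemma closureP (A : set L) x : closure A x <-> forall B, nbhs x B -> A `&` B !=set0.
Proof. by []. Qed.

Lemma nbhs_open_pt (O : set L) x : open O -> O x -> nbhs x O.
Proof. by move=> oO Ox; apply: open_nbhs_nbhs. Qed.

Lemma closure_shift (C : set L) (w : L) : (forall c, C c -> C (c + w)) ->
  forall x, closure C x -> closure C (x + w).
Proof.
move=> hC x /closureP hx; apply/closureP => N hN.
have : nbhs x [set y | N (1 *: y + w)] by apply: nbhs_affine; rewrite scale1r.
move=> /hx [y [Cy Ny]]; exists (y + w); split; first exact: hC.
by move: Ny; rewrite /= scale1r.
Qed.

Definition convexL (C : set L) := forall (a b : L) (t : R), 0 <= t -> t <= 1 ->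
  C a -> C b -> C (t *: a + (1 - t) *: b).

Lemma closure_conv (C : set L) : convexL C -> convexL (closure C).
Proof.
move=> hC.
have step1 : forall a b t, 0 <= t -> t <= 1 -> C a -> closure C b ->
    closure C (t *: a + (1 - t) *: b).
  move=> a b t h0 h1 Ca /closureP hb; apply/closureP => N hN.
  have : nbhs b [set y | N ((1 - t) *: y + t *: a)].
    by apply: nbhs_affine; rewrite addrC.
  move=> /hb [y [Cy Ny]]; exists (t *: a + (1 - t) *: y); split.
    exact: hC.
  by rewrite addrC.
move=> a b t h0 h1 /closureP ha hb; apply/closureP => N hN.
have hN' : nbhs (t *: a + (1 - t) *: b) (interior N) by apply: nbhs_open_pt; [exact: open_interior|exact: hN].
have : nbhs a [set y | interior N (t *: y + (1 - t) *: b)] by apply: nbhs_affine.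
move=> /ha [y [Cy Ny]].
have /closureP := step1 y b t h0 h1 Cy hb.
move=> /(_ _ (@nbhs_open_pt _ _ (open_interior N) Ny)) [z [Cz Nz]].
by exists z; split => //; apply: interior_subset.
Qed.

Lemma dense_pt (D O : set L) : dense D -> open O -> O !=set0 -> exists y, D y /\ O y.
Proof. by move=> hD oO nO; have [y [Oy Dy]] := hD O nO oO; exists y. Qed.

Lemma int_comb (C : set L) : convexL C -> forall a b t, 0 < t -> t <= 1 ->
  C a -> interior C b -> interior C (t *: b + (1 - t) *: a).
Proof.
move=> hC a b t t0 t1 Ca Cb.
set w := (- (t^-1 * (1 - t))) *: a.
have tn0 : t != 0 by rewrite gt_eqF.
have e1 : t^-1 *: (t *: b + (1 - t) *: a) + w = b.
  rewrite /w scalerDr !scalerA mulVf // scale1r -addrA -scalerDl.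
  by rewrite addrN scale0r addr0.
have e2 : forall y, t *: (t^-1 *: y + w) + (1 - t) *: a = y.
  move=> y; rewrite /w scalerDr !scalerA divff // scale1r -addrA -scalerDl.
  by rewrite mulrN mulrA divff // mul1r addNr scale0r addr0.
have : nbhs (t *: b + (1 - t) *: a) [set y | C (t^-1 *: y + w)].
  by apply: nbhs_affine; rewrite e1.
rewrite /interior /=; apply: filterS => y /= hy.
by rewrite -(e2 y); apply: hC => //; exact: ltW.
Qed.

Lemma cont_eq_dense (D : set L) (f g : L -> \bar R) : dense D -> continuous f ->
  continuous g -> (forall y, D y -> f y = g y) -> f = g.
Proof.
move=> hD cf cg hfg; apply/funext => x; apply: ereal_hausdorff => P Q hP hQ.
have hN : nbhs x (f @^-1` P `&` g @^-1` Q) by apply: filterI; [exact: cf | exact: cg].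
have [y [Dy Ny]] := dense_pt _ _ hD (@open_interior _ _) (ex_intro _ x hN).
have [Py Qy] := interior_subset Ny.
by exists (f y); split => //; rewrite hfg.
Qed.

End Topo.
Local Open Scope convex_scope.
Section Cv.
Context {R : realType} {L : lmodType R}.
Lemma convE (x y : convex_lmodType L) (l : {i01 R}) : x <| l |> y = l%:num *: (x:L) + (1 - l%:num) *: (y:L).
Proof. by []. Qed.
Lemma convex_setP (C : set L) : convex_set (C : set (convex_lmodType L)) ->
  forall (a b : L) (t : R), 0 <= t -> t <= 1 -> C a -> C b -> C (t *: a + (1 - t) *: b).
Proof.
move=> hC a b t h0 h1 ha hb.
have := hC a b (Itv01 h0 h1) (mem_set ha) (mem_set hb).
by rewrite inE.
Qed.
End Cv.
Section Sig.
Context {R : realType} {L S : topologicalLmodType R} (iota : {linear S -> L}).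

Lemma dp_cont : continuous (dual_pairing iota : initial_topology iota -> {ptws tdual L -> R^o}).
Proof.
move=> x.
apply: (proj2 (@cvg_sup _ _ _ (dual_pairing iota @ x) _ (fmap_filter _ (nbhs_filter x)))) => i.
have hc : continuous ((fun f : tdual L -> R^o => f i) \o (dual_pairing iota : initial_topology iota -> _)).
  move=> y; rewrite /comp /dual_pairing.
  apply: (@continuous_comp (initial_topology iota) L R^o iota (sval i : L -> R^o)).
    exact: initial_continuous.
  exact: (svalP i).
exact: (@continuous_comp_initial (tdual L -> R^o) (initial_topology iota) R^o (fun f => f i) (dual_pairing iota) hc x).
Qed.
Lemma sigma_init_closed (A : set S) : sigma_closed iota A -> @closed (initial_topology iota) A.
Proof.
rewrite /sigma_closed /closed => hA x hx; apply: hA.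
move=> N; rewrite nbhsE => -[B [oB Bx] BN].
case: oB => O oO eqB.
have hB : nbhs (x : initial_topology iota) B.
  rewrite -eqB; apply: (dp_cont x); apply: open_nbhs_nbhs; split => //.
  by rewrite -eqB in Bx.
have [y [Ay By]] := hx _ hB.
by exists y; split => //; apply: BN.
Qed.

Lemma init_nbhsP (x : S) (N : set S) : nbhs (x : initial_topology iota) N ->
  exists O : set L, [/\ open O, O (iota x) & forall s, O (iota s) -> N s].
Proof.
rewrite nbhsE => -[B [[O oO eqB] Bx] BN]; exists O; split => //.
  by rewrite -eqB in Bx.
by move=> s Os; apply: BN; rewrite -eqB.
Qed.

Lemma init_nbhs_of (x : S) (N : set S) (O : set L) : open O -> O (iota x) ->
  (forall s, O (iota s) -> N s) -> nbhs (x : initial_topology iota) N.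
Proof.
move=> oO Ox h; rewrite nbhsE; exists (iota @^-1` O) => //.
by split => //; exists O.
Qed.

End Sig.

Section Rho.
Context {R : realType} {V : lmodType R} (B : set V) (S0 : R) (v : V).
Lemma rho_le X m : B (X + (m / S0) *: v) -> (rho B S0 v X <= m%:E)%E.
Proof. by move=> h; apply: ge_ereal_inf; exists m%:E => //; exists m. Qed.
Lemma rho_lt X x : (rho B S0 v X < x)%E -> exists2 m : R, B (X + (m / S0) *: v) & (m%:E < x)%E.
Proof. by move=> /ereal_inf_lt [_ [m hm <-]] hx; exists m. Qed.
Lemma rho_ge X r : (forall m, B (X + (m / S0) *: v) -> r <= m) -> (r%:E <= rho B S0 v X)%E.
Proof. by move=> h; apply/ereal_infP => _ [m hm <-]; rewrite lee_fin; exact: h. Qed.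
Lemma comb_line (x : V) p q t : t *: (x + p *: v) + (1 - t) *: (x + q *: v) = x + (t * p + (1 - t) * q) *: v.
Proof.
rewrite !scalerDr !scalerA addrACA -scalerDl subrKC scale1r.
by rewrite scalerDl.
Qed.
End Rho.

Lemma th_alg {R : realType} (M r e S0 : R) : S0 != 0 -> M * 2 - (r * 2 + e) != 0 ->
  e/2/(M - (r + e/2)) * (M/S0) + (1 - e/2/(M - (r+e/2))) * ((r + e/2)/S0) = (r + e)/S0.
Proof. by move=> h1 h2; field; rewrite h1 h2. Qed.

Section Main.
Variables (R : realType) (L S : topologicalLmodType R) (Lplus : set L)
  (iota : {linear S -> L}) (A : set S) (S0 : R) (ST : S).
Hypotheses (Hcone : positive_cone Lplus) (Hdense : dense (range iota))
  (Hacc : acceptance_set (iota @^-1` Lplus) A)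
  (Hconv : convex_set (A : set (convex_lmodType S)))
  (Hsig : sigma_closed iota A)
  (Htr : traded_asset (iota @^-1` Lplus) S0 ST)
  (Hfin : finite_valued (rho A S0 ST)).

Let v := iota ST.
Let K := closure (iota @` A).

Let S0pos : 0 < S0. Proof. by case: Htr. Qed.
Let S0n0 : S0 != 0. Proof. by rewrite gt_eqF. Qed.

Lemma A_pos a t : A a -> 0 <= t -> A (a + (t / S0) *: ST).
Proof.
move=> Aa t0; case: Hacc => _ _; apply => //.
rewrite /= linearZ; case: Hcone => _ _ hs _; apply: hs.
  by rewrite divr_ge0 // ltW.
by case: Htr => _ [].
Qed.

Lemma A_up s m m' : A (s + (m / S0) *: ST) -> m <= m' -> A (s + (m' / S0) *: ST).
Proof.
move=> hA hm; have := @A_pos _ (m' - m) hA; rewrite subr_ge0 => /(_ hm).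
by rewrite -addrA -scalerDl -mulrDl subrKC.
Qed.

Lemma A_conv : convexL A.
Proof. exact: (@convex_setP R S A Hconv). Qed.

Lemma iA_conv : convexL (iota @` A).
Proof.
move=> _ _ t t0 t1 [a Aa <-] [b Ab <-].
by exists (t *: a + (1 - t) *: b); [exact: A_conv | rewrite linearD !linearZ].
Qed.

Lemma K_conv : convexL K.
Proof. exact: closure_conv iA_conv. Qed.

Lemma K_up x m m' : K (x + (m / S0) *: v) -> m <= m' -> K (x + (m' / S0) *: v).
Proof.
move=> hK hm.
have -> : x + (m' / S0) *: v = (x + (m / S0) *: v) + ((m' - m) / S0) *: v.
  by rewrite -addrA -scalerDl -mulrDl subrKC.
apply: closure_shift hK => _ [a Aa <-].
exists (a + ((m' - m) / S0) *: ST); last by rewrite linearD linearZ.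
by apply: A_pos => //; rewrite subr_ge0.
Qed.

Lemma AK s : A s -> K (iota s).
Proof. by move=> As; apply: subset_closure; exists s. Qed.

Lemma preK s : K (iota s) -> A s.
Proof.
move=> hK; apply: (@sigma_init_closed _ _ _ iota A Hsig) => N hN.
have [O [oO Os hO]] := @init_nbhsP _ _ _ iota _ _ hN.
have [_ [[a Aa <-] Oa]] := hK O (@nbhs_open_pt _ _ _ _ oO Os).
by exists a; split => //; apply: hO.
Qed.

Lemma rhoK_agree s : rho K S0 v (iota s) = rho A S0 ST s.
Proof.
rewrite /rho; congr ereal_inf; congr image; apply/funext => m; apply/propext.
rewrite /v /=; have -> : iota s + (m / S0) *: iota ST = iota (s + (m / S0) *: ST) by rewrite linearD linearZ.
split; [exact: preK | exact: AK].
Qed.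

Lemma up_int (y0 : L) : interior K y0 -> forall x,
  exists M0, forall M, M0 <= M -> interior K (x + (M / S0) *: v).
Proof.
move=> Hy0 x.
have oG := open_affine (-1) ((2 : R) *: x) _ (@open_interior _ K).
have nG : [set y : L | interior K ((-1) *: y + (2 : R) *: x)] !=set0.
  by exists ((2 : R) *: x - y0); rewrite /= scaleN1r opprB subrK.
have [_ [[s _ <-] Gs]] := dense_pt _ _ Hdense oG nG.
have : (rho A S0 ST s < +oo)%E by have := Hfin s; rewrite fin_numElt => /andP[].
move=> /rho_lt [m Am _].
exists (m / 2) => M hM.
have AM : A (s + ((2 * M) / S0) *: ST) by apply: A_up Am _; lra.
have h0 : (0 : R) < 2^-1 by rewrite invr_gt0.
have h1 : (2^-1 : R) <= 1 by rewrite invf_le1 //; lra.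
have := @int_comb _ _ K K_conv (iota (s + ((2 * M) / S0) *: ST)) ((-1) *: iota s + (2 : R) *: x) (2^-1) h0 h1 (AK _ AM) Gs.
have -> : (1 - 2^-1 : R) = 2^-1 by field.
rewrite -scalerDr linearD linearZ /= scaleN1r addrACA addNr add0r scalerDr scalerA mulVf ?scale1r; last by lra.
by rewrite /v scalerA; congr (K° (_ + _ *: _)); field.
Qed.

Lemma low_bd (y0 : L) : interior K y0 -> forall x,
  exists M, forall m, K (x + (m / S0) *: v) -> M < m.
Proof.
move=> Hy0 x.
have oG := open_affine (2 : R) ((-1) *: x) _ (@open_interior _ K).
have nG : [set y : L | interior K ((2 : R) *: y + (-1) *: x)] !=set0.
  exists (2^-1 *: (x + y0)); rewrite /= scalerA mulfV ?scale1r ?scaleN1r; [by rewrite addrC addKr | by rewrite pnatr_eq0].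
have [_ [[s _ <-] Gs]] := dense_pt _ _ Hdense oG nG.
have hf := Hfin s; set r := fine (rho A S0 ST s).
have er : rho A S0 ST s = r%:E by rewrite fineK.
exists (2 * r - 1) => m Km.
have h0 : (0 : R) <= 2^-1 by rewrite invr_ge0.
have h1 : (2^-1 : R) <= 1 by rewrite invf_le1 //; lra.
have := K_conv _ _ _ h0 h1 Km (interior_subset Gs).
have -> : (1 - 2^-1 : R) = 2^-1 by field.
rewrite -scalerDr scaleN1r [X in 2^-1 *: X]addrC addrA subrK.
have -> : 2^-1 *: ((2 : R) *: iota s + (m / S0) *: v) = iota (s + ((m / 2) / S0) *: ST).
  rewrite linearD linearZ /= scalerDr !scalerA mulVf ?scale1r; last by rewrite pnatr_eq0.
  by rewrite /v; congr (_ + _ *: _); field.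
move=> /preK /rho_le; rewrite er lee_fin => hr.
lra.
Qed.

Lemma rhoK_fin (y0 : L) : interior K y0 -> finite_valued (rho K S0 v).
Proof.
move=> Hy0 x.
have [M0 hM0] := up_int _ Hy0 x.
have [M hM] := low_bd _ Hy0 x.
have hu : (rho K S0 v x <= M0%:E)%E by apply: rho_le; exact: interior_subset (hM0 _ (lexx _)).
have hl : (M%:E <= rho K S0 v x)%E by apply: rho_ge => m /hM /ltW.
rewrite fin_numElt; apply/andP; split.
  exact: lt_le_trans (ltNyr M) hl.
exact: le_lt_trans hu (ltry M0).
Qed.

Lemma rhoK_cont (y0 : L) : interior K y0 -> continuous (rho K S0 v).
Proof.
move=> Hy0 x.
have hf := rhoK_fin _ Hy0.
set f := rho K S0 v.
have ex : f x = (fine (f x))%:E by rewrite fineK.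
set r := fine (f x).
rewrite /continuous_at ex; apply: cvg_EFin.
  by apply: (@filterS _ _ _ setT _ (fun y _ => hf y) filterT).
apply: (proj2 (@cvgrPdist_le _ R^o _ _ _ (fine \o f) r)) => e e0.
have Hup : \forall y \near x, (f y <= (r + e)%:E)%E.
  have [m Km hm] : exists2 m, K (x + (m / S0) *: v) & m < r + e/2.
    have : (f x < (r + e/2)%:E)%E by rewrite ex lte_fin -/r; lra.
    by move=> /rho_lt [m Km]; rewrite lte_fin => hm; exists m.
  have Ka : K (x + ((r + e/2) / S0) *: v) by apply: K_up Km _; lra.
  have [M0 hM0] := up_int _ Hy0 x.
  set M := Num.max M0 (r + e).
  have hMr : r + e <= M by rewrite le_max lexx orbT.
  have hMb : interior K (x + (M / S0) *: v) by apply: hM0; rewrite le_max lexx.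
  set th := (e / 2) / (M - (r + e/2)).
  have th0 : 0 < th by apply: divr_gt0; lra.
  have th1 : th <= 1 by rewrite ler_pdivrMr; lra.
  have := @int_comb _ _ K K_conv _ _ _ th0 th1 Ka hMb.
  rewrite comb_line.
  have -> : th * (M / S0) + (1 - th) * ((r + e/2) / S0) = (r + e) / S0.
    rewrite /th; apply: th_alg => //; rewrite subr_eq0 gt_eqF //; lra.
  move=> hint.
  have := @nbhs_affine _ _ 1 (((r + e) / S0) *: v) x K; rewrite scale1r => /(_ hint).
  apply: filterS => y; rewrite /= scale1r => Ky.
  exact: rho_le.
have Hlow : \forall y \near x, ((r - e)%:E <= f y)%E.
  have nK : ~ K (x + ((r - e) / S0) *: v).
    by move=> /rho_le; rewrite -/f ex lee_fin -/r; lra.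
  have oK : open (~` K) by rewrite openC; exact: closed_closure.
  have := @nbhs_affine _ _ 1 (((r - e) / S0) *: v) x (~` K); rewrite scale1r => /(_ (nbhs_open_pt _ _ oK nK)).
  apply: filterS => y; rewrite /= scale1r => nKy.
  apply: rho_ge => m Km; rewrite leNgt; apply/negP => hm; apply: nKy.
  by apply: K_up Km _; exact: ltW.
apply: (@filterS _ _ _ (fun y => (f y <= (r + e)%:E)%E /\ ((r - e)%:E <= f y)%E)); last exact: filterI Hup Hlow.
move=> y [hu hl].
have ey : f y = (fine (f y))%:E by rewrite fineK.
rewrite ey !lee_fin in hu hl.
rewrite /= ler_norml; apply/andP; split; lra.
Qed.

Lemma b_to_c : {for 0, continuous (rho A S0 ST : initial_topology iota -> \bar R)} ->
  (@interior (initial_topology iota) A) !=set0.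
Proof.
move=> hb.
have hf0 := Hfin 0.
set r := fine (rho A S0 ST 0).
have e0 : rho A S0 ST 0 = r%:E by rewrite fineK.
have hb0 : rho A S0 ST @ (0 : initial_topology iota) --> rho A S0 ST 0 := hb.
move: hb0; rewrite e0 => /fine_cvgP [_ hc].
have hN : \forall y \near (0 : initial_topology iota), `|r - (fine \o rho A S0 ST) y| < 1.
  by apply: (proj1 (@cvgrPdist_lt _ R^o _ _ _ (fine \o rho A S0 ST) r) hc).
have [O [oO O0 hO]] := @init_nbhsP _ _ _ iota _ _ hN.
rewrite linear0 in O0.
exists (((r + 1) / S0) *: ST).
apply: (@init_nbhs_of _ _ _ iota _ A [set y | O (1 *: y + (- ((r + 1) / S0)) *: v)]).
- exact: open_affine.
- by rewrite /= scale1r linearZ scaleNr addrN.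
move=> s; rewrite /= scale1r => Os.
have : `|r - fine (rho A S0 ST (s - ((r + 1) / S0) *: ST))| < 1.
  by apply: hO; rewrite linearB linearZ /= -scaleNr.
set s' := s - ((r + 1) / S0) *: ST.
have es : rho A S0 ST s' = (fine (rho A S0 ST s'))%:E by rewrite fineK.
rewrite ltr_norml => /andP [h1 _].
have : (rho A S0 ST s' < (r + 1)%:E)%E by rewrite es lte_fin; lra.
move=> /rho_lt [m Am]; rewrite lte_fin => hm.
have := A_up _ _ _ Am (ltW hm).
by rewrite /s' subrK.
Qed.

Lemma c_to_d : (@interior (initial_topology iota) A) !=set0 -> interior K !=set0.
Proof.
move=> [z hz]; have [O [oO Oz hO]] := @init_nbhsP _ _ _ iota _ _ hz.
exists (iota z).
apply: (@filterS _ _ _ O); last exact: nbhs_open_pt _ _ oO Oz.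
move=> y Oy; apply/closureP => N hN.
have oON : open (O `&` interior N) by apply: openI => //; exact: open_interior.
have [_ [[s _ <-] [Os Ns]]] := dense_pt _ _ Hdense oON (ex_intro _ y (conj Oy hN)).
by exists (iota s); split; [exists s => //; exact: hO | exact: interior_subset].
Qed.

Lemma a_to_b : (exists B : set L,
      [/\ finite_valued (rho B S0 (iota ST)), continuous (rho B S0 (iota ST))
        & forall s, rho B S0 (iota ST) (iota s) = rho A S0 ST s]) ->
  {for 0, continuous (rho A S0 ST : initial_topology iota -> \bar R)}.
Proof.
move=> [B [_ cB agr]].
have -> : (rho A S0 ST : initial_topology iota -> \bar R) = rho B S0 v \o iota.
  by apply/funext => s /=; rewrite agr.
exact: (@continuous_comp (initial_topology iota) L _ iota (rho B S0 v) 0 (@initial_continuous _ _ iota 0) (cB _)).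
Qed.

Lemma concl :
  let a := exists B : set L,
      [/\ finite_valued (rho B S0 (iota ST)), continuous (rho B S0 (iota ST))
        & forall s, rho B S0 (iota ST) (iota s) = rho A S0 ST s] in
  let b := {for 0, continuous
              (rho A S0 ST : initial_topology iota -> \bar R)} in
  let c := (@interior (initial_topology iota) A) !=set0 in
  let d := interior (closure (iota @` A)) !=set0 in
  [/\ a <-> b, b <-> c, c <-> d
    & a ->
      let ClA := closure (iota @` A) in
      [/\ finite_valued (rho ClA S0 (iota ST)),
          continuous (rho ClA S0 (iota ST)),
          (forall s, rho ClA S0 (iota ST) (iota s) = rho A S0 ST s)
        & forall B : set L,
            finite_valued (rho B S0 (iota ST)) ->
            continuous (rho B S0 (iota ST)) ->
            (forall s, rho B S0 (iota ST) (iota s) = rho A S0 ST s) ->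
            rho B S0 (iota ST) = rho ClA S0 (iota ST)]].
Proof.
move=> a b c d.
have ab : a -> b by exact: a_to_b.
have bc : b -> c by exact: b_to_c.
have cd : c -> d by exact: c_to_d.
have da : d -> a.
  move=> [y0 hy0]; exists K; split.
  - exact: rhoK_fin hy0.
  - exact: rhoK_cont hy0.
  - exact: rhoK_agree.
split.
- by split => [/ab|/bc/cd/da].
- by split => [/bc|/cd/da/ab].
- by split => [/cd|/da/ab/bc].
move=> ha ClA.
have : d := cd (bc (ab ha)).
rewrite /d => -[y0 hy0].
split.
- exact: rhoK_fin hy0.
- exact: rhoK_cont hy0.
- exact: rhoK_agree.
move=> B _ cB agr.
rewrite /ClA; apply: (cont_eq_dense _ _ _ Hdense cB (rhoK_cont _ hy0)).
by move=> _ [s _ <-]; rewrite agr rhoK_agree.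
Qed.

End Main.

Theorem theorem3p1 (R : realType)
    (L S : topologicalLmodType R) (Lplus : set L) (iota : {linear S -> L})
    (A : set S) (S0 : R) (ST : S) :
  positive_cone Lplus ->
  injective iota ->
  dense (range iota) ->
  acceptance_set (iota @^-1` Lplus) A ->
  convex_set (A : set (convex_lmodType S)) ->
  sigma_closed iota A ->
  traded_asset (iota @^-1` Lplus) S0 ST ->
  finite_valued (rho A S0 ST) ->
  continuous (rho A S0 ST) ->
  let a := exists B : set L,
      [/\ finite_valued (rho B S0 (iota ST)), continuous (rho B S0 (iota ST))
        & forall s, rho B S0 (iota ST) (iota s) = rho A S0 ST s] in
  let b := {for 0, continuous
              (rho A S0 ST : initial_topology iota -> \bar R)} in
  let c := (@interior (initial_topology iota) A) !=set0 in
  let d := interior (closure (iota @` A)) !=set0 in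
  [/\ a <-> b, b <-> c, c <-> d
    & a ->
      let ClA := closure (iota @` A) in
      [/\ finite_valued (rho ClA S0 (iota ST)),
          continuous (rho ClA S0 (iota ST)),
          (forall s, rho ClA S0 (iota ST) (iota s) = rho A S0 ST s)
        & forall B : set L,
            finite_valued (rho B S0 (iota ST)) ->
            continuous (rho B S0 (iota ST)) ->
            (forall s, rho B S0 (iota ST) (iota s) = rho A S0 ST s) ->
            rho B S0 (iota ST) = rho ClA S0 (iota ST)]].
Proof.
move=> Hcone Hinj Hdense Hacc Hconv Hsig Htr Hfin Hcont.
exact: (@concl R L S Lplus iota A S0 ST Hcone Hdense Hacc Hconv Hsig Htr Hfin).
Qed.
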